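(* There exists an absolute constant $C_2>0$ such that for every $\delta_0>0$ the following holds: if $\|\mathcal T-\mathcal S\|_{\mathrm{op}}<\delta_0$ and $x\in\mathbb C^n$ satisfies $$d(x,\mathcal G)\le\frac{16-5C_2\delta_0}{192+4C_2\delta_0}\,\|x^\natural\|,$$ then $x^+$ is a critical point of $f$ if and only if $x^+$ is a global minimizer of $f$.
   Context: Let $n,m\ge 1$, $a_1,\dots,a_m\in\mathbb C^n$ and $x^\natural\in\mathbb C^n$ with $x^\natural\ne0$. For $a,b\in\mathbb C^n$ write $\langle a,b\rangle=\sum_{j}a_j\overline{b_j}$ and let $\|\cdot\|$ be the Euclidean norm. Let $y_i=|\langle a_i,x^\natural\rangle|^2$. For $v\in\mathbb C^n$ put $v^+=(\mathrm{Re}\,v,\mathrm{Im}\,v)\in\mathbb R^{2n}$; $x$ and $x^+$ always correspond. Define $f:\mathbb R^{2n}\to\mathbb R$ by $f(x^+)=\sum_{i=1}^m\big(|\langle a_i,x\rangle|^2-y_i\big)^2$. Let $\mathcal G$ be the set of global minimizers of $f$ (viewed in $\mathbb C^n$) and $d(x,\mathcal G)$ the Euclidean distance from $x$ to $\mathcal G$. Fix $\sigma>0$ (in the paper, $\sigma^2=\mathrm{Var}((a_i^+)_1)$ for random measurement vectors), set $c=m\sigma^4$. Define the order-4 tensors on $\mathbb R^{2n}$: $\mathcal T=\frac1c\sum_{i=1}^m(a_i^+)^{\otimes 4}$ and $\mathcal S_{i_1i_2i_3i_4}=\mathbf 1_{i_1=i_2,\,i_3=i_4}+\mathbf 1_{i_1=i_3,\,i_2=i_4}+\mathbf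 1_{i_1=i_4,\,i_2=i_3}$, and $\|\mathcal R\|_{\mathrm{op}}=\sup\{\langle \mathcal R,u_1\otimes u_2\otimes u_3\otimes u_4\rangle:\ u_j\in\mathbb R^{2n},\ \|u_1\|\|u_2\|\|u_3\|\|u_4\|=1\}$ (tensor inner product = sum of entrywise products). *)

(* Defs.v *)
From HB Require Import structures.
From mathcomp Require Import all_boot all_order all_algebra.
From mathcomp Require Import complex.
From mathcomp Require Import all_classical all_reals all_analysis.
Set Implicit Arguments. Unset Strict Implicit. Unset Printing Implicit Defensive.
Import Order.TTheory GRing.Theory Num.Theory.
Import numFieldNormedType.Exports.
Local Open Scope ring_scope.
Local Open Scope classical_set_scope.

Section PhaseRetrieval.
Variable R : realType.

Definition cinner n (a b : 'rV[R[i]]_n) : R[i] :=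
  \sum_(j < n) a ord0 j * (conjc (b ord0 j)).

Definition csqabs (z : R[i]) : R := (complex.Re z) ^+ 2 + (complex.Im z) ^+ 2.

Definition cnorm n (x : 'rV[R[i]]_n) : R := Num.sqrt (\sum_(j < n) csqabs (x ord0 j)).

Definition rnorm k (u : 'rV[R]_k) : R := Num.sqrt (\sum_(j < k) (u ord0 j) ^+ 2).

Definition plusv n (v : 'rV[R[i]]_n) : 'rV[R]_(n + n) :=
  row_mx (map_mx (@complex.Re R) v) (map_mx (@complex.Im R) v).

Definition unplus n (u : 'rV[R]_(n + n)) : 'rV[R[i]]_n :=
  \row_(j < n) Complex (lsubmx u ord0 j) (rsubmx u ord0 j).

Definition meas n m (a : 'I_m -> 'rV[R[i]]_n) (xnat : 'rV[R[i]]_n) (i : 'I_m) : R :=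
  csqabs (cinner (a i) xnat).

Definition floss n m (a : 'I_m -> 'rV[R[i]]_n) (xnat : 'rV[R[i]]_n)
  (u : 'rV[R]_(n + n)) : R :=
  \sum_(i < m) (csqabs (cinner (a i) (unplus u)) - meas a xnat i) ^+ 2.

Definition critical_point k (g : 'rV[R]_k -> R) (u : 'rV[R]_k) : Prop :=
  differentiable g u /\ 'd g u = (0 : 'rV[R]_k -> R).

Definition global_minimizer k (g : 'rV[R]_k -> R) (u : 'rV[R]_k) : Prop :=
  forall w, g u <= g w.

Definition Gset n m (a : 'I_m -> 'rV[R[i]]_n) (xnat : 'rV[R[i]]_n) : set 'rV[R[i]]_n :=
  [set z | global_minimizer (floss a xnat) (plusv z)].

Definition dist_set n (x : 'rV[R[i]]_n) (G : set 'rV[R[i]]_n) : R :=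
  inf [set cnorm (x - g) | g in G].

Definition tensor4 k := 'I_k -> 'I_k -> 'I_k -> 'I_k -> R.

Definition Ttensor n m (a : 'I_m -> 'rV[R[i]]_n) (sigma : R) : tensor4 (n + n) :=
  fun i1 i2 i3 i4 => (m%:R * sigma ^+ 4)^-1 *
    \sum_(i < m) (plusv (a i) ord0 i1 * plusv (a i) ord0 i2 *
                  plusv (a i) ord0 i3 * plusv (a i) ord0 i4).

Definition Stensor k : tensor4 k :=
  fun i1 i2 i3 i4 =>
    ((i1 == i2) && (i3 == i4))%:R + ((i1 == i3) && (i2 == i4))%:R
    + ((i1 == i4) && (i2 == i3))%:R.

Definition tpair k (Rt : tensor4 k) (u1 u2 u3 u4 : 'rV[R]_k) : R :=
  \sum_(i1 < k) \sum_(i2 < k) \sum_(i3 < k) \sum_(i4 < k)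
    Rt i1 i2 i3 i4 * u1 ord0 i1 * u2 ord0 i2 * u3 ord0 i3 * u4 ord0 i4.

Definition opnorm4 k (Rt : tensor4 k) : R :=
  sup [set r | exists u1 u2 u3 u4 : 'rV[R]_k,
         rnorm u1 * rnorm u2 * rnorm u3 * rnorm u4 = 1 /\ r = tpair Rt u1 u2 u3 u4].

Definition tsub k (A B : tensor4 k) : tensor4 k :=
  fun i1 i2 i3 i4 => A i1 i2 i3 i4 - B i1 i2 i3 i4.

End PhaseRetrieval.

(* Main.v *)
Require Import Defs.
From HB Require Import structures.
From mathcomp Require Import all_boot all_order all_algebra.
From mathcomp Require Import complex.
From mathcomp Require Import all_classical all_reals all_analysis.
From mathcomp Require Import ring lra.
Import Order.TTheory GRing.Theory Num.Theory.
Import numFieldNormedType.Exports.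
Local Open Scope ring_scope.
Local Open Scope classical_set_scope.

Set Implicit Arguments. Unset Strict Implicit.

Section RealVec.
Variable R : realType.
Variable n : nat.
Local Notation V := 'rV[R]_(n + n).

Definition dot (u v : V) : R := \sum_(k < n + n) u ord0 k * v ord0 k.
Definition Lm (u : V) : V := row_mx (- rsubmx u) (lsubmx u).

Lemma dot_split u v : dot u v =
  \sum_(j < n) u ord0 (lshift n j) * v ord0 (lshift n j) +
  \sum_(j < n) u ord0 (rshift n j) * v ord0 (rshift n j).
Proof. by rewrite /dot big_split_ord. Qed.

Lemma Lm_l u j : Lm u ord0 (lshift n j) = - u ord0 (rshift n j).
Proof. by rewrite /Lm row_mxEl !mxE. Qed.
Lemma Lm_r u j : Lm u ord0 (rshift n j) = u ord0 (lshift n j).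
Proof. by rewrite /Lm row_mxEr !mxE. Qed.

Lemma dotC u v : dot u v = dot v u.
Proof. by apply: eq_bigr => k _; rewrite mulrC. Qed.
Lemma dotDl u v w : dot (u + v) w = dot u w + dot v w.
Proof. by rewrite /dot -big_split; apply: eq_bigr => k _; rewrite !mxE mulrDl. Qed.
Lemma dotDr u v w : dot w (u + v) = dot w u + dot w v.
Proof. by rewrite dotC dotDl !(dotC w). Qed.
Lemma dotZl c u w : dot (c *: u) w = c * dot u w.
Proof. by rewrite /dot mulr_sumr; apply: eq_bigr => k _; rewrite !mxE mulrA. Qed.
Lemma dotZr c u w : dot w (c *: u) = c * dot w u.
Proof. by rewrite dotC dotZl dotC. Qed.
Lemma dotNl u w : dot (- u) w = - dot u w.
Proof. by rewrite -scaleN1r dotZl mulN1r. Qed.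
Lemma dotNr u w : dot w (- u) = - dot w u.
Proof. by rewrite dotC dotNl dotC. Qed.
Lemma dotBl u v w : dot (u - v) w = dot u w - dot v w.
Proof. by rewrite dotDl dotNl. Qed.
Lemma dotBr u v w : dot w (u - v) = dot w u - dot w v.
Proof. by rewrite dotDr dotNr. Qed.
Lemma dot0l w : dot 0 w = 0.
Proof. by rewrite /dot big1 // => k _; rewrite mxE mul0r. Qed.

Lemma LmD u v : Lm (u + v) = Lm u + Lm v.
Proof.
apply/rowP => k; rewrite -(fintype.splitK k); case: (fintype.split k) => j /=.
  by rewrite Lm_l [RHS]mxE !Lm_l !mxE opprD.
by rewrite Lm_r [RHS]mxE !Lm_r !mxE.
Qed.
Lemma LmZ c u : Lm (c *: u) = c *: Lm u.
Proof.
apply/rowP => k; rewrite -(fintype.splitK k); case: (fintype.split k) => j /=.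
  by rewrite Lm_l [RHS]mxE !Lm_l !mxE mulrN.
by rewrite Lm_r [RHS]mxE !Lm_r !mxE.
Qed.
Lemma LmN u : Lm (- u) = - Lm u.
Proof. by rewrite -scaleN1r LmZ scaleN1r. Qed.
Lemma LmB u v : Lm (u - v) = Lm u - Lm v.
Proof. by rewrite LmD LmN. Qed.
Lemma LmLm u : Lm (Lm u) = - u.
Proof.
apply/rowP => k; rewrite -(fintype.splitK k); case: (fintype.split k) => j /=.
  by rewrite Lm_l Lm_r mxE.
by rewrite Lm_r Lm_l mxE.
Qed.
Lemma dotLL u v : dot (Lm u) (Lm v) = dot u v.
Proof.
rewrite !dot_split; under eq_bigr do rewrite !Lm_l mulrNN.
under [X in _ + X = _]eq_bigr do rewrite !Lm_r.
by rewrite addrC.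
Qed.
Lemma dotLskew u v : dot (Lm u) v = - dot u (Lm v).
Proof.
rewrite !dot_split; under eq_bigr do rewrite !Lm_l.
under [X in _ + X = _]eq_bigr do rewrite !Lm_r.
under [X in _ = - (X + _)]eq_bigr do rewrite !Lm_l.
under [X in _ = - (_ + X)]eq_bigr do rewrite !Lm_r.
rewrite opprD addrC; congr (_ + _); rewrite -sumrN; apply: eq_bigr => j _.
  by rewrite mulrN opprK.
by rewrite mulNr.
Qed.
Lemma dotLu u : dot u (Lm u) = 0.
Proof.
have := dotLskew u u; rewrite dotC => /eqP; rewrite -addr_eq0 -mulr2n.
by rewrite mulrn_eq0 /= => /eqP.
Qed.
Lemma dot_ge0 u : 0 <= dot u u.
Proof. by rewrite /dot sumr_ge0 // => k _; rewrite -expr2 sqr_ge0. Qed.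
Lemma dot_eq0 u : dot u u = 0 -> u = 0.
Proof.
move=> /eqP; rewrite /dot psumr_eq0; last by move=> k _; rewrite -expr2 sqr_ge0.
move=> /allP H; apply/matrixP => i k; rewrite mxE (ord1 i); have := H k (mem_index_enum _).
by rewrite -expr2 sqrf_eq0 => /eqP.
Qed.
Lemma rnormE u : rnorm u = Num.sqrt (dot u u).
Proof. by rewrite /rnorm /dot; congr Num.sqrt; apply: eq_bigr => k _; rewrite expr2. Qed.
Lemma rnorm_sq u : rnorm u ^+ 2 = dot u u.
Proof. by rewrite rnormE sqr_sqrtr // dot_ge0. Qed.
Lemma dotLm_norm u : dot (Lm u) (Lm u) = dot u u.
Proof. exact: dotLL. Qed.
End RealVec.
Arguments dot {R n}.
Arguments Lm {R n}.

Unset Implicit Arguments. Set Strict Implicit.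

Section Cplx.
Variable R : realType.
Variable n : nat.

Lemma ReD (x y : R[i]) : complex.Re (x + y) = complex.Re x + complex.Re y.
Proof. by case: x; case: y. Qed.
Lemma ImD (x y : R[i]) : complex.Im (x + y) = complex.Im x + complex.Im y.
Proof. by case: x; case: y. Qed.
Lemma ReS m (F : 'I_m -> R[i]) : complex.Re (\sum_(j < m) F j) = \sum_(j < m) complex.Re (F j).
Proof.
exact: (big_morph _ ReD).
Qed.
Lemma ImS m (F : 'I_m -> R[i]) : complex.Im (\sum_(j < m) F j) = \sum_(j < m) complex.Im (F j).
Proof.
exact: (big_morph _ ImD).
Qed.

Lemma plusv_l (z : 'rV[R[i]]_n) j : plusv z ord0 (lshift n j) = complex.Re (z ord0 j).
Proof. by rewrite /plusv row_mxEl mxE. Qed.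
Lemma plusv_r (z : 'rV[R[i]]_n) j : plusv z ord0 (rshift n j) = complex.Im (z ord0 j).
Proof. by rewrite /plusv row_mxEr mxE. Qed.

Lemma Re_cinner (w z : 'rV[R[i]]_n) : complex.Re (cinner w z) = dot (plusv w) (plusv z).
Proof.
rewrite /cinner ReS dot_split -big_split /=; apply: eq_bigr => j _.
rewrite !plusv_l !plusv_r; case: (w ord0 j) => a b; case: (z ord0 j) => c d /=.
ring.
Qed.
Lemma Im_cinner (w z : 'rV[R[i]]_n) : complex.Im (cinner w z) = dot (plusv w) (Lm (plusv z)).
Proof.
rewrite /cinner ImS dot_split -big_split /=; apply: eq_bigr => j _.
rewrite Lm_l Lm_r !plusv_l !plusv_r; case: (w ord0 j) => a b; case: (z ord0 j) => c d /=.
ring.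
Qed.
Lemma plusv_unplus (u : 'rV[R]_(n + n)) : plusv (unplus u) = u.
Proof.
apply/rowP => k; rewrite -(fintype.splitK k); case: (fintype.split k) => j /=.
  by rewrite plusv_l /unplus mxE /= mxE.
by rewrite plusv_r /unplus mxE /= mxE.
Qed.
Lemma plusvB (x y : 'rV[R[i]]_n) : plusv (x - y) = plusv x - plusv y.
Proof.
apply/rowP => k; rewrite -(fintype.splitK k); case: (fintype.split k) => j /=.
  by rewrite !(plusv_l, mxE) ReD; case: (y ord0 j).
by rewrite !(plusv_r, mxE) ImD; case: (y ord0 j).
Qed.
Lemma cnorm_rnorm (z : 'rV[R[i]]_n) : cnorm z = rnorm (plusv z).
Proof.
rewrite /cnorm rnormE dot_split -big_split /=; congr Num.sqrt; apply: eq_bigr => j _.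
by rewrite /csqabs !plusv_l !plusv_r !expr2.
Qed.
End Cplx.

Section Loss.
Variables (R : realType) (n m : nat) (a : 'I_m -> 'rV[R[i]]_n) (xnat : 'rV[R[i]]_n).
Local Notation V := 'rV[R]_(n + n).

Definition Pp i (u : V) := dot (plusv (a i)) u.
Definition Qf i (u : V) := Pp i u ^+ 2 + Pp i (Lm u) ^+ 2.
Definition Bf i (u v : V) := Pp i u * Pp i v + Pp i (Lm u) * Pp i (Lm v).
Definition yv i := Qf i (plusv xnat).

Lemma floss_E u : floss a xnat u = \sum_(i < m) (Qf i u - yv i) ^+ 2.
Proof.
apply: eq_bigr => i _.
by rewrite /meas /csqabs !Re_cinner !Im_cinner plusv_unplus.
Qed.

Lemma Pp_lin i (u v : V) h : Pp i (h *: v + u) = h * Pp i v + Pp i u.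
Proof. by rewrite /Pp dotDr dotZr. Qed.

Lemma Qf_shift i (u v : V) h :
  Qf i (h *: v + u) = Qf i u + 2 * h * Bf i u v + h ^+ 2 * Qf i v.
Proof. rewrite /Qf /Bf LmD LmZ !Pp_lin; ring. Qed.

Lemma floss_shift u v h : floss a xnat (h *: v + u) - floss a xnat u =
  h * \sum_(i < m) ((2 * Bf i u v + h * Qf i v) *
     (2 * (Qf i u - yv i) + 2 * h * Bf i u v + h ^+ 2 * Qf i v)).
Proof.
rewrite !floss_E -sumrB mulr_sumr; apply: eq_bigr => i _.
rewrite Qf_shift; ring.
Qed.

Lemma derive_floss u v :
  'D_v (floss a xnat) u = \sum_(i < m) 4 * (Qf i u - yv i) * Bf i u v.
Proof.
rewrite /derive; apply: cvg_lim; first exact: norm_hausdorff.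
set K0 := \sum_(i < m) 4 * (Qf i u - yv i) * Bf i u v.
set K1 := \sum_(i < m) (4 * Bf i u v ^+ 2 + 2 * Qf i v * (Qf i u - yv i)).
set K2 := \sum_(i < m) 4 * Bf i u v * Qf i v.
set K3 := \sum_(i < m) Qf i v ^+ 2.
pose g := fun h : R => K0 + h * (K1 + h * (K2 + h * K3)).
have H : {near (0:R)^', g =1 (fun h : R => h^-1 *: ((floss a xnat \o shift u) (h *: v) - floss a xnat u))}.
  near=> h; apply/esym; rewrite /= /shift floss_shift -[_ *: _]/(h^-1 * _) mulrA mulVf; last by near: h; exact: nbhs_dnbhs_neq.
  rewrite mul1r /g /K3 mulr_sumr /K2 -big_split /= mulr_sumr /K1 -big_split /= mulr_sumr /K0 -big_split /=; apply: eq_bigr => i _; ring.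
apply: cvg_trans (near_eq_cvg H) _.
have -> : K0 = g 0 by rewrite /g mul0r addr0.
apply: cvg_trans (cvg_app g (@nbhs_dnbhs _ (0:R))) _.
rewrite /g; apply: cvgD; first exact: cvg_cst.
apply: cvgM; first exact: cvg_id.
apply: cvgD; first exact: cvg_cst.
apply: cvgM; first exact: cvg_id.
apply: cvgD; first exact: cvg_cst.
apply: cvgM; first exact: cvg_id.
exact: cvg_cst.
Unshelve. all: by end_near.
Qed.
End Loss.
Arguments Pp {R n m} a i u.
Arguments Qf {R n m} a i u.
Arguments Bf {R n m} a i u v.
Arguments yv {R n m} a xnat i.

Section Diff.
Variables (R : realType) (n m : nat) (a : 'I_m -> 'rV[R[i]]_n) (xnat : 'rV[R[i]]_n).
Local Notation V := 'rV[R]_(n + n).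

Lemma diff_dot (w : V) (u : V) : differentiable (fun x : V => dot w x) u.
Proof.
have -> : (fun x : V => dot w x) = \sum_(k < n + n) (fun x : V => w ord0 k * x ord0 k).
  by apply/funext => x; rewrite fct_sumE.
apply: differentiable_sum => k.
exact: (differentiableZ (w ord0 k) (differentiable_coord u ord0 k)).
Qed.

Lemma diff_Qf i (u : V) : differentiable (Qf a i) u.
Proof.
have -> : Qf a i = (fun x => Pp a i x * Pp a i x + Pp a i (Lm x) * Pp a i (Lm x)).
  by apply/funext => x; rewrite /Qf !expr2.
have d1 : differentiable (Pp a i) u by exact: diff_dot.
have d2 : differentiable (fun x => Pp a i (Lm x)) u.
  have -> : (fun x => Pp a i (Lm x)) = (fun x => dot (- Lm (plusv (a i))) x).
    by apply/funext => x; rewrite /Pp dotNl dotLskew opprK.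
  exact: diff_dot.
exact: (differentiableD (differentiableM d1 d1) (differentiableM d2 d2)).
Qed.

Lemma diff_floss (u : V) : differentiable (floss a xnat) u.
Proof.
have -> : floss a xnat = \sum_(i < m) (fun x => (Qf a i x - yv a xnat i) * (Qf a i x - yv a xnat i)).
  by apply/funext => x; rewrite floss_E fct_sumE; apply: eq_bigr => i _; rewrite expr2.
apply: differentiable_sum => i.
have d : differentiable (fun x => Qf a i x - yv a xnat i) u.
  exact: (differentiableB (diff_Qf i u) (differentiable_cst _ _)).
exact: (differentiableM d d).
Qed.
End Diff.

Section Tens.
Variables (R : realType) (k : nat).

Lemma sum_delta (F : 'I_k -> R) i : \sum_(j < k) (i == j)%:R * F j = F i.
Proof.
rewrite (bigD1 i) //= eqxx mul1r big1 ?addr0 // => j /negPf.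
by rewrite eq_sym => ->; rewrite mul0r.
Qed.

Lemma sum_delta2 (F : 'I_k -> 'I_k -> R) :
  \sum_(i < k) \sum_(j < k) (i == j)%:R * F i j = \sum_(i < k) F i i.
Proof. by apply: eq_bigr => i _; rewrite sum_delta. Qed.

Lemma sum4_prod (A B : 'I_k -> 'I_k -> R) :
  \sum_(i < k) \sum_(j < k) \sum_(p < k) \sum_(q < k) A i j * B p q =
  (\sum_(i < k) \sum_(j < k) A i j) * (\sum_(p < k) \sum_(q < k) B p q).
Proof.
rewrite big_distrl; apply: eq_bigr => i _; rewrite big_distrl; apply: eq_bigr => j _.
rewrite big_distrr; apply: eq_bigr => p _; by rewrite big_distrr.
Qed.

Lemma tpair_sub (A B : tensor4 R k) u1 u2 u3 u4 :
  tpair (tsub A B) u1 u2 u3 u4 = tpair A u1 u2 u3 u4 - tpair B u1 u2 u3 u4.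
Proof.
rewrite /tpair -sumrB; apply: eq_bigr => i1 _; rewrite -sumrB; apply: eq_bigr => i2 _.
rewrite -sumrB; apply: eq_bigr => i3 _; rewrite -sumrB; apply: eq_bigr => i4 _.
rewrite /tsub; ring.
Qed.

Lemma tpairZ1 (A : tensor4 R k) c u1 u2 u3 u4 :
  tpair A (c *: u1) u2 u3 u4 = c * tpair A u1 u2 u3 u4.
Proof.
rewrite /tpair mulr_sumr; apply: eq_bigr => i1 _; rewrite mulr_sumr; apply: eq_bigr => i2 _.
rewrite mulr_sumr; apply: eq_bigr => i3 _; rewrite mulr_sumr; apply: eq_bigr => i4 _.
rewrite mxE; ring.
Qed.

Definition dk (u v : 'rV[R]_k) := \sum_(j < k) u ord0 j * v ord0 j.

Lemma tpair_rank1 (x1 x2 x3 x4 u1 u2 u3 u4 : 'rV[R]_k) :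
  tpair (fun i1 i2 i3 i4 => x1 ord0 i1 * x2 ord0 i2 * x3 ord0 i3 * x4 ord0 i4) u1 u2 u3 u4
  = dk x1 u1 * dk x2 u2 * dk x3 u3 * dk x4 u4.
Proof.
rewrite /tpair /dk -!mulrA big_distrl; apply: eq_bigr => i1 _ /=.
rewrite [X in _ = _ * X]big_distrl big_distrr; apply: eq_bigr => i2 _ /=.
rewrite [X in _ = _ * (_ * X)]big_distrl big_distrr big_distrr; apply: eq_bigr => i3 _ /=.
rewrite !big_distrr; apply: eq_bigr => i4 _ /=.
ring.
Qed.

Lemma tpair_S (u1 u2 u3 u4 : 'rV[R]_k) :
  tpair (@Stensor R k) u1 u2 u3 u4 =
  dk u1 u2 * dk u3 u4 + dk u1 u3 * dk u2 u4 + dk u1 u4 * dk u2 u3.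
Proof.
transitivity (
  \sum_(i1 < k) \sum_(i2 < k) \sum_(i3 < k) \sum_(i4 < k)
     ((i1 == i2)%:R * (u1 ord0 i1 * u2 ord0 i2)) * ((i3 == i4)%:R * (u3 ord0 i3 * u4 ord0 i4))
  + \sum_(i1 < k) \sum_(i2 < k) \sum_(i3 < k) \sum_(i4 < k)
     ((i1 == i3)%:R * (u1 ord0 i1 * u3 ord0 i3)) * ((i2 == i4)%:R * (u2 ord0 i2 * u4 ord0 i4))
  + \sum_(i1 < k) \sum_(i2 < k) \sum_(i3 < k) \sum_(i4 < k)
     ((i1 == i4)%:R * (u1 ord0 i1 * u4 ord0 i4)) * ((i2 == i3)%:R * (u2 ord0 i2 * u3 ord0 i3))).
  rewrite /tpair -!big_split; apply: eq_bigr => i1 _; rewrite -!big_split; apply: eq_bigr => i2 _.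
  rewrite -!big_split; apply: eq_bigr => i3 _; rewrite -!big_split; apply: eq_bigr => i4 _ /=.
  rewrite /Stensor -!mulnb !natrM; ring.
congr (_ + _ + _).
- by rewrite sum4_prod !sum_delta2.
- under eq_bigr do rewrite exchange_big.
  rewrite (sum4_prod (fun i p => (i == p)%:R * (u1 ord0 i * u3 ord0 p))
                     (fun j q => (j == q)%:R * (u2 ord0 j * u4 ord0 q))).
  by rewrite !sum_delta2.
- under eq_bigr do under eq_bigr do rewrite exchange_big.
  under eq_bigr do rewrite exchange_big.
  rewrite (sum4_prod (fun i p => (i == p)%:R * (u1 ord0 i * u4 ord0 p))
                     (fun j q => (j == q)%:R * (u2 ord0 j * u3 ord0 q))).
  by rewrite !sum_delta2.
Qed.
End Tens.
Arguments tpair_S {R k}.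
Arguments tpair_sub {R k}.
Arguments tpairZ1 {R k}.
Arguments tpair_rank1 {R k}.

Section TensT.
Variables (R : realType) (n m : nat) (a : 'I_m -> 'rV[R[i]]_n) (sigma : R).

Lemma tpair_T (u1 u2 u3 u4 : 'rV[R]_(n + n)) :
  tpair (Ttensor a sigma) u1 u2 u3 u4 = (m%:R * sigma ^+ 4)^-1 *
    \sum_(i < m) Pp a i u1 * Pp a i u2 * Pp a i u3 * Pp a i u4.
Proof.
set c := (m%:R * sigma ^+ 4)^-1.
have E i : Pp a i u1 * Pp a i u2 * Pp a i u3 * Pp a i u4 =
  tpair (fun i1 i2 i3 i4 => plusv (a i) ord0 i1 * plusv (a i) ord0 i2 *
      plusv (a i) ord0 i3 * plusv (a i) ord0 i4) u1 u2 u3 u4.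
  by rewrite tpair_rank1.
rewrite (eq_bigr _ (fun i _ => E i)) mulr_sumr /tpair /Ttensor -/c.
under [RHS]eq_bigr do rewrite mulr_sumr.
rewrite [RHS]exchange_big /=; apply: eq_bigr => i1 _.
under [RHS]eq_bigr do rewrite mulr_sumr.
rewrite [RHS]exchange_big /=; apply: eq_bigr => i2 _.
under [RHS]eq_bigr do rewrite mulr_sumr.
rewrite [RHS]exchange_big /=; apply: eq_bigr => i3 _.
under [RHS]eq_bigr do rewrite mulr_sumr.
rewrite [RHS]exchange_big /=; apply: eq_bigr => i4 _.
rewrite mulr_sumr !big_distrl; apply: eq_bigr => i _ /=; ring.
Qed.
End TensT.
Arguments tpair_T {R n m}.

Section OpN.
Variables (R : realType) (k : nat).

Lemma rnorm_ge0 (v : 'rV[R]_k) : 0 <= rnorm v.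
Proof. exact: sqrtr_ge0. Qed.

Lemma coord_le_rnorm (v : 'rV[R]_k) j : `|v ord0 j| <= rnorm v.
Proof.
rewrite /rnorm -sqrtr_sqr ler_wsqrtr // (bigD1 j) //= lerDl.
by rewrite sumr_ge0 // => i _; rewrite sqr_ge0.
Qed.

Lemma rnormZ (c : R) (v : 'rV[R]_k) : rnorm (c *: v) = `|c| * rnorm v.
Proof.
rewrite /rnorm -sqrtr_sqr -sqrtrM ?sqr_ge0 //; congr Num.sqrt.
by rewrite mulr_sumr; apply: eq_bigr => i _; rewrite mxE exprMn.
Qed.

Lemma norm_sum_le (F G : 'I_k -> R) :
  (forall i, `|F i| <= G i) -> `|\sum_(i < k) F i| <= \sum_(i < k) G i.
Proof. by move=> H; apply: le_trans (ler_norm_sum _ _ _) _; apply: ler_sum => i _. Qed.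

Definition tabs (Rt : tensor4 R k) :=
  \sum_(i1 < k) \sum_(i2 < k) \sum_(i3 < k) \sum_(i4 < k) `|Rt i1 i2 i3 i4|.

Lemma tpair_abs (Rt : tensor4 R k) u1 u2 u3 u4 :
  `|tpair Rt u1 u2 u3 u4| <= tabs Rt * (rnorm u1 * rnorm u2 * rnorm u3 * rnorm u4).
Proof.
rewrite /tabs /tpair mulr_suml; apply: norm_sum_le => i1.
rewrite mulr_suml; apply: norm_sum_le => i2.
rewrite mulr_suml; apply: norm_sum_le => i3.
rewrite mulr_suml; apply: norm_sum_le => i4.
rewrite !normrM !mulrA.
apply: ler_pM; rewrite ?mulr_ge0 ?normr_ge0 ?rnorm_ge0 ?coord_le_rnorm //.
apply: ler_pM; rewrite ?mulr_ge0 ?normr_ge0 ?rnorm_ge0 ?coord_le_rnorm //.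
apply: ler_pM; rewrite ?mulr_ge0 ?normr_ge0 ?rnorm_ge0 ?coord_le_rnorm //.
apply: ler_pM; rewrite ?mulr_ge0 ?normr_ge0 ?rnorm_ge0 ?coord_le_rnorm //.
Qed.

Lemma tpair_le_opnorm (Rt : tensor4 R k) u1 u2 u3 u4 :
  0 < rnorm u1 * rnorm u2 * rnorm u3 * rnorm u4 ->
  tpair Rt u1 u2 u3 u4 <= opnorm4 Rt * (rnorm u1 * rnorm u2 * rnorm u3 * rnorm u4).
Proof.
set P := rnorm u1 * _ * _ * _ => P0.
have inS : [set r | exists v1 v2 v3 v4 : 'rV[R]_k,
         rnorm v1 * rnorm v2 * rnorm v3 * rnorm v4 = 1 /\ r = tpair Rt v1 v2 v3 v4]
           (P^-1 * tpair Rt u1 u2 u3 u4).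
  exists (P^-1 *: u1), u2, u3, u4; split; last by rewrite tpairZ1.
  rewrite rnormZ ger0_norm ?invr_ge0 ?ltW //.
  have -> : P^-1 * rnorm u1 * rnorm u2 * rnorm u3 * rnorm u4 = P^-1 * P by rewrite /P; ring.
  by rewrite mulVf ?gt_eqF.
have hs : has_sup [set r | exists v1 v2 v3 v4 : 'rV[R]_k,
         rnorm v1 * rnorm v2 * rnorm v3 * rnorm v4 = 1 /\ r = tpair Rt v1 v2 v3 v4].
  split; first by exists (P^-1 * tpair Rt u1 u2 u3 u4).
  exists (tabs Rt) => r [v1 [v2 [v3 [v4 [H1 ->]]]]].
  by apply: le_trans (ler_norm _) _; apply: le_trans (tpair_abs _ _ _ _ _) _; rewrite H1 mulr1.
have := sup_upper_bound hs inS; rewrite /opnorm4 => H.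
by rewrite -ler_pdivrMr // mulrC.
Qed.
End OpN.
Arguments tpair_le_opnorm {R k}.
Arguments rnormZ {R k}.
Arguments rnorm_ge0 {R k}.
Arguments tpair_abs {R k}.
Arguments coord_le_rnorm {R k}.

Section Main.
Variables (R : realType) (n m : nat) (a : 'I_m -> 'rV[R[i]]_n) (xnat : 'rV[R[i]]_n).
Variables (sigma d : R).
Local Notation V := 'rV[R]_(n + n).
Hypothesis m0 : (0 < m)%N.
Hypothesis sig0 : 0 < sigma.
Hypothesis hop : opnorm4 (tsub (Ttensor a sigma) (@Stensor R (n + n)%N)) < d.

Let c := m%:R * sigma ^+ 4.
Lemma c_gt0 : 0 < c.
Proof. by rewrite /c mulr_gt0 ?exprn_gt0 // ltr0n. Qed.

Definition Sf (p q r s : V) := dot p q * dot r s + dot p r * dot q s + dot p s * dot q r.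

Lemma Pp0 i : Pp a i 0 = 0.
Proof. by rewrite /Pp dotC dot0l. Qed.
Lemma dot0r (w : V) : dot w 0 = 0.
Proof. by rewrite dotC dot0l. Qed.

Lemma rnorm0_eq0 (v : V) : rnorm v = 0 -> v = 0.
Proof. by move=> H; apply: dot_eq0; rewrite -rnorm_sq H expr0n. Qed.

Lemma rnorm0 : rnorm (0 : V) = 0.
Proof. by rewrite rnormE dot0l sqrtr0. Qed.

Lemma KB (p q r s : V) :
  `|\sum_(i < m) Pp a i p * Pp a i q * Pp a i r * Pp a i s - c * Sf p q r s|
    <= c * d * (rnorm p * rnorm q * rnorm r * rnorm s).
Proof.
have := tpair_T a sigma p q r s; rewrite -/c => HT.
have HS := tpair_S p q r s.
have Hsub := tpair_sub (Ttensor a sigma) (@Stensor R (n + n)%N) p q r s.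
have -> : \sum_(i < m) Pp a i p * Pp a i q * Pp a i r * Pp a i s =
          c * tpair (Ttensor a sigma) p q r s.
  by rewrite HT mulrA mulfV ?mul1r // gt_eqF // c_gt0.
have -> : Sf p q r s = tpair (@Stensor R (n + n)%N) p q r s by rewrite HS.
rewrite -mulrBr -Hsub normrM (gtr0_norm c_gt0) -mulrA ler_pM2l ?c_gt0 //.
set P := rnorm p * _ * _ * _.
have P0 : 0 <= P by rewrite /P !mulr_ge0 // rnorm_ge0.
have [Pz|Ppos] := eqVneq P 0.
  move/eqP: Pz; rewrite /P !mulf_eq0 => /orP [/orP [/orP [] | ] | ] /eqP/rnorm0_eq0 ->;
  rewrite ?rnorm0 ?mulr0 ?mul0r /tpair big1 ?normr0 ?mulr0 // => i1 _; rewrite big1 // => i2 _;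
  rewrite big1 // => i3 _; rewrite big1 // => i4 _; rewrite mxE; ring.
have Pp : 0 < P by rewrite lt_def Ppos P0.
rewrite ler_norml; apply/andP; split.
  rewrite lerNl -mulN1r -tpairZ1.
  have := tpair_le_opnorm (tsub (Ttensor a sigma) (@Stensor R (n + n)%N)) (-1 *: p) q r s.
  rewrite rnormZ normrN normr1 mul1r -/P => /(_ Pp) H.
  apply: (le_trans H); rewrite ler_pM2r //; exact: ltW.
have := tpair_le_opnorm (tsub (Ttensor a sigma) (@Stensor R (n + n)%N)) p q r s.
rewrite -/P => /(_ Pp) H.
apply: (le_trans H); rewrite ler_pM2r //; exact: ltW.
Qed.

Lemma rnormL (v : V) : rnorm (Lm v) = rnorm v.
Proof. by rewrite !rnormE dotLL. Qed.

Lemma KB2 (p q r s : V) :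
  c * Sf p q r s - c * d * (rnorm p * rnorm q * rnorm r * rnorm s)
    <= \sum_(i < m) Pp a i p * Pp a i q * Pp a i r * Pp a i s /\
  \sum_(i < m) Pp a i p * Pp a i q * Pp a i r * Pp a i s
    <= c * Sf p q r s + c * d * (rnorm p * rnorm q * rnorm r * rnorm s).
Proof. by have := KB p q r s; rewrite ler_distl => /andP[]. Qed.

Lemma quart_bounds (w : V) :
  c * (8 - 4 * d) * (dot w w) ^+ 2 <= \sum_(i < m) Qf a i w ^+ 2 /\
  \sum_(i < m) Qf a i w ^+ 2 <= c * (8 + 4 * d) * (dot w w) ^+ 2.
Proof.
have [l1 u1] := KB2 w w w w.
have [l2 u2] := KB2 w w (Lm w) (Lm w).
have [l3 u3] := KB2 (Lm w) (Lm w) (Lm w) (Lm w).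
have E : \sum_(i < m) Qf a i w ^+ 2 =
  \sum_(i < m) Pp a i w * Pp a i w * Pp a i w * Pp a i w +
  2 * \sum_(i < m) Pp a i w * Pp a i w * Pp a i (Lm w) * Pp a i (Lm w) +
  \sum_(i < m) Pp a i (Lm w) * Pp a i (Lm w) * Pp a i (Lm w) * Pp a i (Lm w).
  rewrite mulr_sumr -!big_split; apply: eq_bigr => i _ /=; rewrite /Qf; ring.
move: l1 u1 l2 u2 l3 u3; rewrite /Sf !rnormL !dotLL !dotLu.
rewrite -rnorm_sq E.
set W := rnorm w; set s1 := \sum_(i < m) _; set s2 := \sum_(i < m) _; set s3 := \sum_(i < m) _.
have cp := c_gt0.
move=> l1 u1 l2 u2 l3 u3; split.
  have -> : c * (8 - 4 * d) * (W ^+ 2) ^+ 2 =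
    (c * (W^+2 * W^+2 + W^+2 * W^+2 + W^+2 * W^+2) - c * d * (W * W * W * W)) +
    2 * (c * (W^+2 * W^+2 + 0 * 0 + 0 * 0) - c * d * (W * W * W * W)) +
    (c * (W^+2 * W^+2 + W^+2 * W^+2 + W^+2 * W^+2) - c * d * (W * W * W * W)) by ring.
  by rewrite lerD // lerD // ler_pM2l.
have -> : c * (8 + 4 * d) * (W ^+ 2) ^+ 2 =
    (c * (W^+2 * W^+2 + W^+2 * W^+2 + W^+2 * W^+2) + c * d * (W * W * W * W)) +
    2 * (c * (W^+2 * W^+2 + 0 * 0 + 0 * 0) + c * d * (W * W * W * W)) +
    (c * (W^+2 * W^+2 + W^+2 * W^+2 + W^+2 * W^+2) + c * d * (W * W * W * W)) by ring.
by rewrite lerD // lerD // ler_pM2l.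
Qed.

Lemma no_spurious (u g : V) :
  (forall i, Qf a i g = yv a xnat i) ->
  dot (Lm g) (u - g) = 0 ->
  (forall v, \sum_(i < m) 4 * (Qf a i u - yv a xnat i) * Bf a i u v = 0) ->
  0 <= d -> d <= 1 / 10 ->
  0 < dot (plusv xnat) (plusv xnat) ->
  dot (u - g) (u - g) * 36 <= dot (plusv xnat) (plusv xnat) ->
  u = g.
Proof.
move=> Hg horth Hcrit d0 d1 X0 Hh.
set h := u - g.
have ue : u = 1 *: h + g by rewrite scale1r /h subrK.
have ri i : Qf a i u - yv a xnat i = 2 * Bf a i g h + Qf a i h.
  by rewrite -Hg ue Qf_shift; ring.
have bi i : Bf a i u h = Bf a i g h + Qf a i h.
  by rewrite ue /Bf /Qf LmD LmZ !Pp_lin; ring.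
have Phi : \sum_(i < m) (Bf a i g h ^+ 2 - Qf a i h ^+ 2) <= 0.
  apply: (@le_trans _ _ (1/2 * \sum_(i < m) 4 * (Qf a i u - yv a xnat i) * Bf a i u h)); last first.
    by rewrite Hcrit mulr0.
  rewrite mulr_sumr; apply: ler_sum => i _; rewrite ri bi.
  rewrite -subr_ge0.
  have -> : 1 / 2 * (4 * (2 * Bf a i g h + Qf a i h) * (Bf a i g h + Qf a i h)) -
    (Bf a i g h ^+ 2 - Qf a i h ^+ 2) = 3 * (Bf a i g h + Qf a i h) ^+ 2 by field.
  by rewrite mulr_ge0 // sqr_ge0.
have o1 : dot h (Lm g) = 0 by rewrite dotC.
have o2 : dot g (Lm h) = 0 by rewrite -[dot g _]opprK -dotLskew horth oppr0.
have [l1 _] := KB2 g h g h.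
have [l2 u2] := KB2 g h (Lm g) (Lm h).
have [l3 _] := KB2 (Lm g) (Lm h) (Lm g) (Lm h).
have [_ uQ] := quart_bounds h.
have [lX _] := quart_bounds (plusv xnat).
have [_ uG] := quart_bounds g.
have EB : \sum_(i < m) Bf a i g h ^+ 2 =
  \sum_(i < m) Pp a i g * Pp a i h * Pp a i g * Pp a i h +
  2 * \sum_(i < m) Pp a i g * Pp a i h * Pp a i (Lm g) * Pp a i (Lm h) +
  \sum_(i < m) Pp a i (Lm g) * Pp a i (Lm h) * Pp a i (Lm g) * Pp a i (Lm h).
  rewrite mulr_sumr -!big_split; apply: eq_bigr => i _ /=; rewrite /Bf; ring.
have EY : \sum_(i < m) Qf a i g ^+ 2 = \sum_(i < m) Qf a i (plusv xnat) ^+ 2.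
  by apply: eq_bigr => i _; rewrite Hg.
move: Phi; rewrite sumrB EB => Phi.
move: Phi l1 l2 u2 l3; rewrite /Sf !rnormL !dotLL !dotLu o1 o2 (dotC h g).
have Pgh : rnorm g * rnorm h * rnorm g * rnorm h = dot g g * dot h h.
  by rewrite -!rnorm_sq; ring.
rewrite Pgh.
set s1 := \sum_(i < m) _; set s2 := \sum_(i < m) _; set s3 := \sum_(i < m) _.
move=> Phi l1 l2 u2 l3.
move: uG lX; rewrite EY => uG lX.
set G := dot g g in l1 l2 u2 l3 uG *.
set H := dot h h in l1 l2 u2 l3 uQ Hh *.
set X := dot (plusv xnat) (plusv xnat) in lX X0 Hh *.
set s := dot g h in l1 l2 u2 l3.
have cp := c_gt0.
have G0 : 0 <= G by exact: dot_ge0.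
have H0 : 0 <= H by exact: dot_ge0.
have LB : c * ((2 - 4 * d) * (G * H)) <= s1 + 2 * s2 + s3.
  have : c * ((2 - 4 * d) * (G * H)) + c * (6 * s ^+ 2) =
    (c * (s * s + G * H + s * s) - c * d * (G * H)) +
    2 * (c * (s * s + 0 * 0 + 0 * 0) - c * d * (G * H)) +
    (c * (s * s + G * H + s * s) - c * d * (G * H)) by ring.
  have : 0 <= c * (6 * s ^+ 2) by apply: mulr_ge0; [exact: ltW | apply: mulr_ge0 => //; exact: sqr_ge0].
  move=> hs E; rewrite -(lerD2r (c * (6 * s ^+ 2))) E; lra.
have BQ : c * ((2 - 4 * d) * (G * H)) <= c * ((8 + 4 * d) * H ^+ 2).
  lra.
have {}BQ : (2 - 4 * d) * (G * H) <= (8 + 4 * d) * H ^+ 2 by move: BQ; rewrite ler_pM2l.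
have YY : c * ((8 - 4 * d) * X ^+ 2) <= c * ((8 + 4 * d) * G ^+ 2) by lra.
have {}YY : (8 - 4 * d) * X ^+ 2 <= (8 + 4 * d) * G ^+ 2 by move: YY; rewrite ler_pM2l.
have [Hz|Hpos] := eqVneq H 0.
  by apply/eqP; rewrite -subr_eq0; apply/eqP; apply: dot_eq0.
have Hp : 0 < H by rewrite lt_def Hpos H0.
exfalso.
have GH : (2 - 4 * d) * G <= (8 + 4 * d) * H.
  by rewrite -(ler_pM2r Hp) -mulrA; move: BQ; rewrite expr2 mulrA.
have s1' : G * (16 / 10) <= (2 - 4 * d) * G by nra.
have s2' : (8 + 4 * d) * H <= 84 / 10 * H by nra.
have s3' : G <= X / 6 by lra.
have s4' : G ^+ 2 <= X ^+ 2 / 36.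
  have : G * G <= (X / 6) * (X / 6) by apply: ler_pM.
  by rewrite !expr2; lra.
have s5' : (8 + 4 * d) * G ^+ 2 <= 84 / 10 * (X ^+ 2 / 36).
  apply: ler_pM => //; [lra | exact: sqr_ge0 | lra].
have s6' : 76 / 10 * X ^+ 2 <= (8 - 4 * d) * X ^+ 2.
  apply: ler_wpM2r; [exact: sqr_ge0 | lra].
have : 0 < X ^+ 2 by exact: exprn_gt0.
lra.
Qed.
End Main.





Section Fin.
Variables (R : realType) (n m : nat) (a : 'I_m -> 'rV[R[i]]_n) (xnat : 'rV[R[i]]_n).
Local Notation V := 'rV[R]_(n + n).

Lemma floss_ge0 u : 0 <= floss a xnat u.
Proof. by rewrite floss_E sumr_ge0 // => i _; rewrite sqr_ge0. Qed.

Lemma zero_min u : (forall i, Qf a i u = yv a xnat i) -> global_minimizer (floss a xnat) u.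
Proof.
move=> H w; rewrite floss_E big1 ?floss_ge0 // => i _.
by rewrite H subrr expr0n.
Qed.

Lemma min_zero u : global_minimizer (floss a xnat) u -> forall i, Qf a i u = yv a xnat i.
Proof.
move=> H i.
have F0 : floss a xnat u = 0.
  apply/eqP; rewrite eq_le floss_ge0 andbT.
  apply: le_trans (H (plusv xnat)) _.
  by rewrite floss_E big1 // => j _; rewrite subrr expr0n.
move: F0; rewrite floss_E => /eqP; rewrite psumr_eq0; last by move=> j _; rewrite sqr_ge0.
move=> /allP /(_ i (mem_index_enum _)); rewrite sqrf_eq0 subr_eq0 => /eqP //.
Qed.

Lemma rot_gen (u g0 : V) (cc ss : R) :
  cc ^+ 2 + ss ^+ 2 = 1 ->
  cc * dot u (Lm g0) = ss * dot u g0 ->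
  dot u g0 <= cc * dot u g0 + ss * dot u (Lm g0) ->
  let g := cc *: g0 + ss *: Lm g0 in
  (forall i, Qf a i g = Qf a i g0) /\ dot (Lm g) (u - g) = 0 /\
  dot (u - g) (u - g) <= dot (u - g0) (u - g0).
Proof.
move=> H1 H2 H3 g.
have Lg : Lm g = cc *: Lm g0 - ss *: g0 by rewrite /g LmD !LmZ LmLm scalerN.
have gg : dot g g = dot g0 g0.
  have e1 : dot g0 (Lm g0) = 0 by exact: dotLu.
  have e2 : dot (Lm g0) g0 = 0 by rewrite dotC.
  rewrite /g !(dotDl, dotDr, dotZl, dotZr) dotLL e1 e2.
  transitivity ((cc ^+ 2 + ss ^+ 2) * dot g0 g0); first by ring.
  by rewrite H1 mul1r.
split.
  move=> i; rewrite /Qf Lg /g /Pp !(dotDr, dotZr, dotBr, dotNr, dotZr).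
  transitivity ((cc ^+ 2 + ss ^+ 2) * (dot (plusv (a i)) g0 ^+ 2 + dot (plusv (a i)) (Lm g0) ^+ 2)); first by ring.
  by rewrite H1 mul1r.
split.
  rewrite dotBr (dotC (Lm g) g) dotLu subr0 Lg dotBl !dotZl (dotC (Lm g0) u) (dotC g0 u).
  by rewrite H2 mulrC subrr.
rewrite !(dotBl, dotBr) gg (dotC g u) (dotC g0 u).
have -> : dot u g = cc * dot u g0 + ss * dot u (Lm g0) by rewrite /g dotDr !dotZr.
lra.
Qed.
End Fin.
Arguments min_zero {R n m a xnat u}.
Arguments zero_min {R n m a xnat u}.
Arguments rot_gen {R n m} a {u g0 cc ss}.

Lemma unplus_plusv (R : realType) n (z : 'rV[R[i]]_n) : unplus (plusv z) = z.
Proof.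
apply/rowP => j; rewrite /unplus /plusv mxE row_mxKl row_mxKr !mxE.
by case: (z ord0 j).
Qed.

Arguments unplus_plusv {R n}.

Lemma lin_ext (R : ringType) (U : lmodType R) (W : lmodType R) (f g : {linear U -> W}) :
  (forall x, f x = g x) -> f = g.
Proof.
case: f => f [[af] [sf]]; case: g => g [[ag] [sg]] /= H.
have e : f = g by apply: boolp.funext.
subst g.
by rewrite (Prop_irrelevance af ag) (Prop_irrelevance sf sg).
Qed.

Lemma crit_of (R : realType) k (g : 'rV[R]_k -> R) u :
  differentiable g u -> (forall v, 'd g u v = 0) -> critical_point g u.
Proof. by move=> dg H; split => //; apply: lin_ext. Qed.

Theorem proposition7 (R : realType) :
  exists C2 : R, 0 < C2 /\
  forall (delta0 : R), 0 < delta0 ->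
  forall (n m : nat), (0 < n)%N -> (0 < m)%N ->
  forall (a : 'I_m -> 'rV[R[i]]_n) (xnat : 'rV[R[i]]_n) (sigma : R),
  xnat != 0 -> 0 < sigma ->
  opnorm4 (tsub (Ttensor a sigma) (@Stensor R (n + n)%N)) < delta0 ->
  forall x : 'rV[R[i]]_n,
  dist_set x (Gset a xnat) <=
    (16 - 5 * C2 * delta0) / (192 + 4 * C2 * delta0) * cnorm xnat ->
  (critical_point (floss a xnat) (plusv x) <->
   global_minimizer (floss a xnat) (plusv x)).
Proof.
exists 160; split; first by [].
move=> d d0 n m n0 m0 a xnat sigma xn0 sig0 hop x hdist.
set xn := plusv xnat.
have X0 : 0 < dot xn xn.
  rewrite lt_def dot_ge0 andbT; apply/eqP => /dot_eq0 H.
  move: xn0; rewrite -(unplus_plusv xnat) -/xn H => /eqP; apply; apply/rowP => j; by rewrite !mxE.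
set X := cnorm xnat.
have XE : X = rnorm xn by rewrite /X cnorm_rnorm.
have Xp : 0 < X by rewrite XE rnormE sqrtr_gt0.
have Xsq : X ^+ 2 = dot xn xn by rewrite XE rnorm_sq.
set Ds := [set cnorm (x - g) | g in Gset a xnat].
have xnG : Gset a xnat xnat by apply: zero_min.
have hinf : has_inf Ds.
  split; first by exists (cnorm (x - xnat)), xnat.
  by exists 0 => r [g _ <-]; exact: sqrtr_ge0.
have D0 : 0 <= dist_set x (Gset a xnat).
  apply: lb_le_inf; first by exists (cnorm (x - xnat)), xnat.
  by move=> r [g _ <-]; exact: sqrtr_ge0.
set rho := (16 - 5 * 160 * d) / (192 + 4 * 160 * d) in hdist.
have den0 : 0 < 192 + 4 * 160 * d by lra.
have rho0 : 0 <= rho.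
  have : 0 <= rho * X by apply: le_trans hdist.
  by rewrite pmulr_lge0.
have num0 : 0 <= 16 - 5 * 160 * d.
  have -> : 16 - 5 * 160 * d = rho * (192 + 4 * 160 * d) by rewrite /rho divfK // gt_eqF.
  by rewrite mulr_ge0 // ltW.
have d1 : d <= 1 / 10 by lra.
have rho12 : rho <= 1 / 12 by rewrite /rho ler_pdivrMr //; lra.
have hD : dist_set x (Gset a xnat) <= X / 12.
  apply: le_trans hdist _; rewrite mulrC ler_pM2l //; lra.
split.
- move=> [dF dF0].
  have Hcrit : forall v, \sum_(i < m) 4 * (Qf a i (plusv x) - yv a xnat i) * Bf a i (plusv x) v = 0.
    by move=> v; rewrite -derive_floss deriveE // dF0.
  have e12 : 0 < X / 12 by rewrite divr_gt0.
  have [e [g0 g0G <-] he] := inf_adherent e12 hinf.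
  have zg0 := min_zero g0G.
  set u := plusv x.
  set s0 := dot u (plusv g0); set t0 := dot u (Lm (plusv g0)).
  have [cc [ss [h1 [h2 h3]]]] : exists cc ss : R, cc ^+ 2 + ss ^+ 2 = 1 /\ cc * t0 = ss * s0 /\
      s0 <= cc * s0 + ss * t0.
    have [Nz|Nnz] := eqVneq (s0 ^+ 2 + t0 ^+ 2) 0.
      have t00 : t0 = 0 by apply/eqP; rewrite -sqrf_eq0; apply/eqP; nra.
      have s00 : s0 = 0 by apply/eqP; rewrite -sqrf_eq0; apply/eqP; nra.
      exists 1, 0; rewrite t00 s00; split; first by rewrite expr1n expr0n addr0.
      by split; [ring | lra].
    set N := Num.sqrt (s0 ^+ 2 + t0 ^+ 2).
    have Npos : 0 < s0 ^+ 2 + t0 ^+ 2 by rewrite lt_def Nnz addr_ge0 // sqr_ge0.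
    have N0 : 0 < N by rewrite sqrtr_gt0.
    have NN : N ^+ 2 = s0 ^+ 2 + t0 ^+ 2 by rewrite sqr_sqrtr // ltW.
    exists (s0 / N), (t0 / N); split.
      by rewrite !expr_div_n -mulrDl -NN mulfV // expf_neq0 // gt_eqF.
    split; first by rewrite mulrAC [RHS]mulrAC [s0 * t0]mulrC.
    have -> : s0 / N * s0 + t0 / N * t0 = (s0 ^+ 2 + t0 ^+ 2) / N by field; rewrite ?gt_eqF //; apply/eqP; rewrite gt_eqF.
    rewrite -NN expr2 mulfK ?gt_eqF //.
    have : s0 ^+ 2 <= N ^+ 2 by rewrite NN lerDl sqr_ge0.
    move=> H; case: (lerP s0 0) => hs; first lra.
    by rewrite -(ler_pXn2r (n := 2)) // ?nnegrE ?ltW.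
  have [Qg [orth dle]] := rot_gen a h1 h2 h3.
  set g := cc *: plusv g0 + ss *: Lm (plusv g0) in Qg orth dle.
  have zg : forall i, Qf a i g = yv a xnat i by move=> i; rewrite Qg zg0.
  have dg0 : rnorm (u - plusv g0) < X / 6.
    by rewrite /u -plusvB -cnorm_rnorm; lra.
  have dsq : dot (u - g) (u - g) * 36 <= dot xn xn.
    rewrite -Xsq; apply: le_trans (ler_wpM2r _ dle) _ => //.
    rewrite -rnorm_sq.
    have r0 : 0 <= rnorm (u - plusv g0) by exact: rnorm_ge0.
    have : rnorm (u - plusv g0) * rnorm (u - plusv g0) <= X / 6 * (X / 6).
      by apply: ler_pM => //; exact: ltW.
    rewrite expr2; lra.
  have ug : u = g.
    exact: (@no_spurious R n m a xnat sigma d m0 sig0 hop u g zg orth Hcrit (ltW d0) d1 X0 dsq).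
  by rewrite -/u ug; apply: zero_min.
- move=> Hmin; apply: crit_of; first exact: diff_floss.
  move=> v; rewrite -deriveE; last exact: diff_floss.
  rewrite derive_floss big1 // => i _; rewrite (min_zero Hmin) subrr mulr0 mul0r //.
Qed.
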